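(* Let $G=(V,E)$ be a directed graph and $K\subset V$ a set of $|K|=k$ terminals. Then there exists a reachability-preserving minor $H$ of $G$ whose number of non-terminal vertices $|V(H)\setminus K|$ is $O(k^{3})$.
   Context: A $k$-terminal digraph is a digraph $G=(V,E)$ with a designated terminal set $K\subset V$, $|K|=k$. A minor of a digraph $G$ is any digraph obtained from $G$ by a sequence of vertex deletions, edge deletions and edge contractions (contracting a directed edge $(u,v)$ identifies $u$ and $v$ into one vertex, discarding loops), where terminals are never deleted and no contraction identifies two terminals (a vertex obtained by merging a terminal with non-terminals is identified with that terminal). A digraph $H$ with $K\subseteq V(H)$ is a reachability-preserving minor (RPM) of $G$ if $H$ is a minor of $G$ and for all $x,x'\in K$ there is a directed path from $x$ to $x'$ in $H$ if and only if there is one in $G$. The size of $H$ is $|V(H)\setminus K|$. *)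

(* Defs.v *)
From mathcomp Require Import all_boot.
Set Implicit Arguments.
Unset Strict Implicit.
Unset Printing Implicit Defensive.

(* A digraph on vertices drawn from a finite universe T is a pair (V, E) with
   V : {set T} and E : {set T * T}, E \subset V x V (directed edges). Simple
   digraphs: parallel edges are merged. *)

Definition wf_digraph (T : finType) (V : {set T}) (E : {set T * T}) : bool :=
  E \subset setX V V.

Definition ren (T : finType) (z w : T) (x : T) : T := if x == z then w else x.

(* One minor operation, never deleting terminals of K and never identifying
   two terminals; a merged vertex containing a terminal is named by it. *)
Inductive dminor_step (T : finType) (K : {set T})
  : {set T} -> {set T * T} -> {set T} -> {set T * T} -> Prop :=
| DelVertex (V : {set T}) (E : {set T * T}) (v : T) :
    v \in V -> v \notin K ->
    dminor_step K V E (V :\ v) [set e in E | (e.1 != v) && (e.2 != v)]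
| DelEdge (V : {set T}) (E : {set T * T}) (e : T * T) :
    e \in E -> dminor_step K V E V (E :\ e)
| Contract (V : {set T}) (E : {set T * T}) (u v w z : T) :
    (u, v) \in E -> u != v -> ~~ ((u \in K) && (v \in K)) ->
    ((w == u) && (z == v)) || ((w == v) && (z == u)) ->
    z \notin K ->
    dminor_step K V E (V :\ z)
      ([set (ren z w p.1, ren z w p.2) | p in E] :\ (w, w)).

Inductive dminor (T : finType) (K : {set T})
  : {set T} -> {set T * T} -> {set T} -> {set T * T} -> Prop :=
| DMinorRefl (V : {set T}) (E : {set T * T}) : dminor K V E V E
| DMinorStep (V V1 V2 : {set T}) (E E1 E2 : {set T * T}) :
    dminor_step K V E V1 E1 -> dminor K V1 E1 V2 E2 -> dminor K V E V2 E2.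

Definition reach (T : finType) (E : {set T * T}) (x y : T) : bool :=
  connect (fun a b => (a, b) \in E) x y.

Definition is_RPM (T : finType) (K : {set T}) (V : {set T}) (E : {set T * T})
    (V' : {set T}) (E' : {set T * T}) : Prop :=
  [/\ dminor K V E V' E', K \subset V' &
      forall x x', x \in K -> x' \in K -> reach E' x x' = reach E x x'].

Definition rpm_size (T : finType) (K V' : {set T}) : nat := #|V' :\: K|.

(* Main.v *)
Require Import Defs.
From mathcomp Require Import all_boot.
From mathcomp Require Import zify.
From Stdlib Require Import Classical.

Set Implicit Arguments.
Unset Strict Implicit.
Unset Printing Implicit Defensive.

Section Aux.
Variable T : finType.
Implicit Types (E : {set T * T}) (K V : {set T}) (a b c v w x y z s t p q : T).

Lemma conn_ind (e : rel T) (P : T -> Prop) x y :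
  P x -> (forall a b, P a -> e a b -> P b) -> connect e x y -> P y.
Proof.
move=> Px step /connectP [p pth ->].
elim: p x Px pth => [|a p IH] x Px //= /andP[exa pth].
exact: IH (step _ _ Px exa) pth.
Qed.

Lemma reach_trans E x y z : reach E x y -> reach E y z -> reach E x z.
Proof. exact: connect_trans. Qed.

Lemma reach_edge E x y : (x, y) \in E -> reach E x y.
Proof. by move=> h; apply: connect1. Qed.

Lemma reach_refl E x : reach E x x.
Proof. exact: connect0. Qed.

Lemma reach_sub E1 E2 x y : E1 \subset E2 -> reach E1 x y -> reach E2 x y.
Proof.
move=> /subsetP sub; apply: (conn_ind (P := reach E2 x)); first exact: reach_refl.
move=> a b h ab; exact: reach_trans h (reach_edge (sub _ ab)).
Qed.

Lemma ne_sub E1 E2 x y : E2 \subset E1 -> reach E2 x y != reach E1 x y ->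
  reach E1 x y /\ ~~ reach E2 x y.
Proof.
move=> sub; case: (boolP (reach E2 x y)) => [h|h].
  by rewrite (reach_sub sub h).
by case: (reach E1 x y).
Qed.

Lemma split_edge E a b p q : reach E p q -> ~~ reach (E :\ (a, b)) p q ->
  reach E p a /\ reach E b q.
Proof.
move=> h nh.
have : reach (E :\ (a,b)) p q \/ (reach E p a /\ reach E b q).
  apply: (conn_ind (P := fun y => reach (E :\ (a,b)) p y \/ (reach E p a /\ reach E b y))) h.
    by left; apply: reach_refl.
  move=> y y' [hy | [h1 h2]] yy'.
    case: (eqVneq (y, y') (a, b)) => [[ea eb]|ne].
      subst; right; split; last exact: reach_refl.
      by apply: reach_sub hy; apply: subsetDl.
    left; apply: reach_trans hy (reach_edge _); by rewrite !inE ne.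
  right; split=> //; exact: reach_trans h2 (reach_edge yy').
by case=> // h'; rewrite h' in nh.
Qed.

Lemma noloop E v x y : reach E x y -> reach (E :\ (v, v)) x y.
Proof.
apply: (conn_ind (P := reach (E :\ (v,v)) x)); first exact: reach_refl.
move=> a b h ab; case: (eqVneq (a, b) (v, v)) => [[ea eb]|ne].
  by subst.
apply: reach_trans h (reach_edge _); by rewrite !inE ne.
Qed.

Definition Edel E (v : T) := [set e in E | (e.1 != v) && (e.2 != v)].
Definition Econ E (v b : T) := [set (ren v b p.1, ren v b p.2) | p : T * T in E] :\ (b, b).

Lemma out_edge E v x y : reach E x y ->
  ~~ reach (Edel E v) x y -> x != v -> y != v ->
  exists b, (v, b) \in E.
Proof.
move=> h nh xv yv.
case: (boolP [exists b, (v, b) \in E]) => [/existsP [b hb]|/existsPn nob]; first by exists b.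
have : reach (Edel E v) x y \/ y = v.
  apply: (conn_ind (P := fun z => reach (Edel E v) x z \/ z = v)) h.
    by left; apply: reach_refl.
  move=> a c [ha | ea] ac.
    case: (eqVneq c v) => [->|cv]; first by right.
    case: (eqVneq a v) => [av|av].
      by subst; move: (nob c); rewrite ac.
    left; apply: reach_trans ha (reach_edge _); by rewrite inE ac /= av cv.
  by subst; move: (nob c); rewrite ac.
case=> [h'|yv']; first by rewrite h' in nh.
by rewrite yv' eqxx in yv.
Qed.

Lemma renN v b x : x != v -> ren v b x = x.
Proof. by rewrite /ren => /negbTE ->. Qed.

Lemma con_fwd E v b x y : reach E x y -> reach (Econ E v b) (ren v b x) (ren v b y).
Proof.
apply: (conn_ind (P := fun z => reach (Econ E v b) (ren v b x) (ren v b z))); first exact: reach_refl.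
move=> a c h ac.
case: (eqVneq (ren v b a, ren v b c) (b, b)) => [[e1 e2]|ne].
  by have -> : ren v b c = ren v b a by rewrite e1 e2.
apply: reach_trans h (reach_edge _).
rewrite /Econ in_setD1 ne /=; apply/imsetP; by exists (a, c).
Qed.

Lemma ren_reach E v b y1 y2 : (v, b) \in E -> ren v b y1 = ren v b y2 ->
  reach (E :|: [set (b, v)]) y1 y2.
Proof.
move=> vb.
have hvb : reach (E :|: [set (b, v)]) v b by apply: reach_edge; rewrite inE vb.
have hbv : reach (E :|: [set (b, v)]) b v by apply: reach_edge; rewrite !inE eqxx orbT.
rewrite /ren; case: ifP => [/eqP->|n1]; case: ifP => [/eqP->|n2] e.
- exact: reach_refl.
- by rewrite -e.
- by rewrite e.
- by rewrite e; exact: reach_refl.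
Qed.

Lemma con_back E v b x y : (v, b) \in E ->
  reach (Econ E v b) (ren v b x) (ren v b y) -> reach (E :|: [set (b, v)]) x y.
Proof.
move=> vb h.
have key : forall z, ren v b z = ren v b y -> reach (E :|: [set (b, v)]) x z.
  apply: (conn_ind (P := fun z' => forall z, ren v b z = z' -> reach (E :|: [set (b, v)]) x z)) h.
    by move=> z ez; apply: ren_reach vb (esym ez).
  move=> a' c' ha /setD1P [_ /imsetP [[p1 p2] hp [e1 e2]]] z ez.
  have h1 : reach (E :|: [set (b, v)]) x p1 by apply: ha; rewrite e1.
  have h2 : reach (E :|: [set (b, v)]) x p2.
    by apply: reach_trans h1 (reach_edge _); rewrite inE hp.
  apply: reach_trans h2 (ren_reach vb _). by rewrite ez e2.
by apply: key.
Qed.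

Lemma rev_split E a b s t : reach (E :|: [set (b, a)]) s t ->
  reach E s t \/ (reach E s b /\ reach E a t).
Proof.
apply: (conn_ind (P := fun y => reach E s y \/ (reach E s b /\ reach E a y))).
  by left; apply: reach_refl.
move=> y y' hy /setUP [yy'|/set1P [ey ey']].
  case: hy => [h|[h1 h2]].
    by left; exact: reach_trans h (reach_edge yy').
  by right; split=> //; exact: reach_trans h2 (reach_edge yy').
subst; case: hy => [h|[h1 h2]]; right; split => //; exact: reach_refl.
Qed.

Lemma notall K (f g : T -> T -> bool) :
  ~ (forall x y, x \in K -> y \in K -> f x y = g x y) ->
  exists x y, [/\ x \in K, y \in K & f x y != g x y].
Proof.
move=> H; apply: NNPP => H2; apply: H => x y hx hy.
case: (eqVneq (f x y) (g x y)) => // ne; exfalso; apply: H2; by exists x, y.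
Qed.

End Aux.

Lemma key (T : finType) (K V1 : {set T}) (E1 : {set T * T}) :
  (forall v, v \in V1 -> v \notin K ->
     ~ (forall x y, x \in K -> y \in K -> reach (Edel E1 v) x y = reach E1 x y)) ->
  (forall e, e \in E1 ->
     ~ (forall x y, x \in K -> y \in K -> reach (E1 :\ e) x y = reach E1 x y)) ->
  (forall v b, (v, b) \in E1 -> v \in V1 -> v != b -> v \notin K ->
     ~ (forall x y, x \in K -> y \in K -> reach (Econ E1 v b) x y = reach E1 x y)) ->
  #|V1 :\: K| <= #|K| ^ 3.
Proof.
move=> HV HE HC.
pose P v (p : T * T * T) := [exists b : T, [&& (v, b) \in E1, v != b,
   [&& p.1.1 \in K, p.1.2 \in K & p.2 \in K],
   reach E1 p.1.1 p.1.2 && ~~ reach (E1 :\ (v, b)) p.1.1 p.1.2 &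
   reach E1 v p.2 && ~~ reach E1 b p.2]].
have exP : forall v, v \in V1 :\: K -> exists p, P v p.
  move=> v /setDP [vV vK].
  have [x [y [xK yK ne]]] := notall (HV v vV vK).
  have xv : x != v by apply: contraNneq vK => <-.
  have yv : y != v by apply: contraNneq vK => <-.
  have sub : Edel E1 v \subset E1 by apply/subsetP => e; rewrite inE => /andP [].
  have [hxy nhxy] := ne_sub sub ne.
  have [b vb] := out_edge hxy nhxy xv yv.
  have vnb : v != b.
    apply/eqP => evb; rewrite -evb in vb.
    apply: (HE _ vb) => x' y' _ _.
    apply/idP/idP; [exact: reach_sub (subsetDl _ _) | exact: noloop].
  have [x1 [y1 [x1K y1K ne1]]] := notall (HE _ vb).
  have [h1 nh1] := ne_sub (subsetDl _ _) ne1.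
  have [s [t [sK tK ne2]]] := notall (HC v b vb vV vnb vK).
  have sv : s != v by apply: contraNneq vK => <-.
  have tv : t != v by apply: contraNneq vK => <-.
  have nst : ~~ reach E1 s t.
    apply/negP => hst; move: ne2.
    by have := con_fwd v b hst; rewrite !renN // => ->; rewrite hst.
  have hst' : reach (Econ E1 v b) s t by move: ne2; rewrite (negbTE nst); case: (reach _ _ _).
  have := @con_back _ E1 v b s t vb; rewrite !renN // => /(_ hst') /rev_split [|[hsb hvt]].
    by rewrite (negbTE nst).
  have nbt : ~~ reach E1 b t.
    by apply: contra nst => hbt; apply: reach_trans hsb hbt.
  exists ((x1, y1), t); apply/existsP; exists b.
  by rewrite /= vb vnb x1K y1K tK h1 nh1 hvt nbt.
have inj : forall v v' p, P v p -> P v' p -> v = v'.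
  move=> v v' [[x y] t] /existsP [b /= /and5P [vb _ _ /andP [hxy nh] /andP [vt nbt]]].
  move=> /existsP [b' /= /and5P [vb' _ _ /andP [_ nh'] /andP [vt' nbt']]].
  apply/eqP; apply: contraT => nvv'.
  have neq : (v, b) != (v', b') by apply: contra nvv' => /eqP [-> _].
  have [hxv hby] := split_edge hxy nh.
  case: (boolP (reach (E1 :\ (v', b')) x v)) => h3.
    case: (boolP (reach (E1 :\ (v', b')) b y)) => h4.
      have : reach (E1 :\ (v', b')) x y.
        apply: reach_trans h3 (reach_trans (reach_edge _) h4); by rewrite !inE neq vb.
      by rewrite (negbTE nh').
    have [hbv' _] := split_edge hby h4.
    by move: nbt; rewrite (reach_trans hbv' vt').
  have [_ hb'v] := split_edge hxv h3.
  by move: nbt'; rewrite (reach_trans hb'v vt).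
pose g v := if [pick p | P v p] is Some p then p else (v, v, v).
have gP : forall v, v \in V1 :\: K -> P v (g v).
  move=> v hv; rewrite /g; case: pickP => [p //|none].
  have [p hp] := exP v hv; by move: (none p); rewrite hp.
have ginj : {in V1 :\: K &, injective g}.
  move=> v v' hv hv' e; apply: (inj v v' (g v)); first exact: gP.
  rewrite e; exact: gP.
have sub : g @: (V1 :\: K) \subset setX (setX K K) K.
  apply/subsetP => p /imsetP [v hv ->].
  have := gP v hv; case: (g v) => [[x y] t] /existsP [b /= /and5P [_ _ /and3P [xK yK tK] _ _]].
  by rewrite !inE xK yK tK.
rewrite -(card_in_imset ginj).
apply: leq_trans (subset_leq_card sub) _.
rewrite !cardsX; lia.
Qed.

Lemma dminor_snoc (T : finType) (K V V1 V2 : {set T}) (E E1 E2 : {set T * T}) :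
  dminor K V E V1 E1 -> dminor_step K V1 E1 V2 E2 -> dminor K V E V2 E2.
Proof.
elim=> [V0 E0 s | V0 Va Vb E0 Ea Eb s0 _ IH s].
- by apply: DMinorStep s _; exact: DMinorRefl.
- exact: DMinorStep s0 (IH s).
Qed.

Theorem theorem1p1 :
  exists c : nat,
    forall (T : finType) (V : {set T}) (E : {set T * T}) (K : {set T}),
      wf_digraph V E -> K \subset V ->
      exists (V' : {set T}) (E' : {set T * T}),
        is_RPM K V E V' E' /\ rpm_size K V' <= c * #|K| ^ 3 + c.
Proof.
exists 1 => T V E K _ KV.
suff main : forall n (V1 : {set T}) (E1 : {set T * T}), #|V1| + #|E1| < n ->
    is_RPM K V E V1 E1 ->
  exists V' E', is_RPM K V E V' E' /\ rpm_size K V' <= 1 * #|K| ^ 3 + 1.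
  apply: (main _ V E (ltnSn _)); split=> //; exact: DMinorRefl.
elim=> [|n IH] V1 E1 hn [hm hK hr]; first by [].
have step : forall V2 E2, dminor_step K V1 E1 V2 E2 -> K \subset V2 ->
    #|V2| + #|E2| < #|V1| + #|E1| ->
    (forall x y, x \in K -> y \in K -> reach E2 x y = reach E1 x y) ->
    exists V' E', is_RPM K V E V' E' /\ rpm_size K V' <= 1 * #|K| ^ 3 + 1.
  move=> V2 E2 st K2 lt eq; apply: (IH V2 E2); first exact: leq_trans lt hn.
  split; [exact: dminor_snoc hm st | exact: K2 | move=> x y hx hy; by rewrite eq ?hr].
have KD : forall v, v \notin K -> K \subset V1 :\ v.
  move=> v vK; apply/subsetP => u uK; rewrite !inE (subsetP hK _ uK) andbT.
  by apply: contraNneq vK => <-.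
case: (classic (exists v, [/\ v \in V1, v \notin K &
    forall x y, x \in K -> y \in K -> reach (Edel E1 v) x y = reach E1 x y]))
  => [[v [vV vK heq]]|noV].
  apply: step; [exact: DelVertex vV vK | exact: KD | | exact: heq].
  have h1 := proper_card (properD1 vV).
  have h2 : #|Edel E1 v| <= #|E1|.
    by apply: subset_leq_card; apply/subsetP => e; rewrite inE => /andP [].
  rewrite /Edel in h2; lia.
case: (classic (exists e, e \in E1 /\
    forall x y, x \in K -> y \in K -> reach (E1 :\ e) x y = reach E1 x y))
  => [[e [eE heq]]|noE].
  apply: step; [exact: DelEdge eE | exact: hK | | exact: heq].
  by rewrite ltn_add2l; apply: proper_card; apply: properD1.
case: (classic (exists v b, [/\ (v, b) \in E1, v \in V1, v != b, v \notin K &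
    forall x y, x \in K -> y \in K -> reach (Econ E1 v b) x y = reach E1 x y]))
  => [[v [b [vb vV vnb vK heq]]]|noC].
  apply: step; [ | exact: KD vK | | exact: heq].
    apply: (@Contract T K V1 E1 v b b v) => //.
      by rewrite (negbTE vK).
    by rewrite !eqxx orbT.
  have h1 := proper_card (properD1 vV).
  have h2 : #|Econ E1 v b| <= #|E1|.
    apply: leq_trans (subset_leq_card (subsetDl _ _)) _; exact: leq_imset_card.
  rewrite -addSn; exact: leq_add h1 h2.
exists V1, E1; split; first by split.
rewrite /rpm_size mul1n; apply: leq_trans (leq_addr 1 _).
apply: (@key _ K V1 E1).
- by move=> v vV vK heq; apply: noV; exists v.
- by move=> e eE heq; apply: noE; exists e.
- by move=> v b vb vV vnb vK heq; apply: noC; exists v, b.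
Qed.
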